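(* Let $F$ be a finite field with $q=|F|$. Let $k,n\in\mathbb{N}$ satisfy $k\le n$. Fix any $a=(a_0,\ldots,a_{k-1})\in F^k$. Then the number of $(2n+1)$-tuples $x=(x_0,\ldots,x_{2n})\in F^{2n+1}$ satisfying $(x_0,\ldots,x_{k-1})=a$ and $\det(H_{n,n}(x))=0$ is $q^{2n-k}$.
   Context: $\mathbb{N}=\{0,1,2,\ldots\}$. For $x=(x_0,\ldots,x_{2n})$, $H_{n,n}(x)$ is the $(n+1)\times(n+1)$ matrix $(x_{i+j})_{0\le i,j\le n}$. *)

(* Defs.v *)
From mathcomp Require Import all_boot all_order all_algebra.
Set Implicit Arguments. Unset Strict Implicit. Unset Printing Implicit Defensive.
Import GRing.Theory.
Local Open Scope ring_scope.

Definition hankel (R : nzRingType) (n : nat) (x : {ffun 'I_(n.*2.+1) -> R})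
  : 'M[R]_(n.+1) :=
  \matrix_(i < n.+1, j < n.+1) x (inord (i + j)).

(* Main.v *)
Require Import Defs.
From mathcomp Require Import all_boot all_order all_algebra.
From mathcomp Require Import zify ring.
Set Implicit Arguments. Unset Strict Implicit. Unset Printing Implicit Defensive.
Import GRing.Theory.
Local Open Scope ring_scope.

Definition eqm {F : fieldType} (j : nat) (p q : {poly F}) :=
  forall i, (i < j)%N -> p`_i = q`_i.

Lemma eqm_refl {F : fieldType} j (p : {poly F}) : eqm j p p.
Proof. by []. Qed.
Lemma eqm_sym {F : fieldType} j (p q : {poly F}) : eqm j p q -> eqm j q p.
Proof. by move=> h i hi; rewrite h. Qed.
Lemma eqm_trans {F : fieldType} j (p q r : {poly F}) :
  eqm j p q -> eqm j q r -> eqm j p r.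
Proof. by move=> h1 h2 i hi; rewrite h1 ?h2. Qed.
Lemma eqm_le {F : fieldType} j k (p q : {poly F}) :
  (k <= j)%N -> eqm j p q -> eqm k p q.
Proof. by move=> hk h i hi; apply: h; apply: leq_trans hk. Qed.
Lemma eqm_mul {F : fieldType} j (p q p' q' : {poly F}) :
  eqm j p p' -> eqm j q q' -> eqm j (p * q) (p' * q').
Proof.
move=> hp hq i hi; rewrite !coefM; apply: eq_bigr => a _.
have ha : (a < j)%N by apply: leq_ltn_trans hi; rewrite -ltnS.
have hb : (i - a < j)%N by apply: leq_ltn_trans hi; rewrite leq_subr.
by rewrite hp // hq.
Qed.
Lemma eqm_small {F : fieldType} j (p q : {poly F}) :
  (size p <= j)%N -> (size q <= j)%N -> eqm j p q -> p = q.
Proof.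
move=> hp hq h; apply/polyP => i; case: (ltnP i j) => hi; first exact: h.
by rewrite !nth_default // (leq_trans _ hi).
Qed.

Definition pinv {F : fieldType} (M : nat) (w : {poly F}) : {poly F} :=
  (w`_0)^-1 *: \sum_(i < M) (1 - (w`_0)^-1 *: w) ^+ i.

Lemma pinvP {F : fieldType} M (w : {poly F}) : w`_0 != 0 -> eqm M (w * pinv M w) 1.
Proof.
move=> w0; set z := 1 - (w`_0)^-1 *: w.
have hw : w = w`_0 *: (1 - z) by rewrite /z opprB addrCA subrr addr0 scalerA divff // scale1r.
have -> : w * pinv M w = 1 - z ^+ M.
  rewrite /pinv {1}hw -scalerAr -scalerAl scalerA.
  rewrite mulVf // scale1r -/z; apply: oppr_inj.
  by rewrite -mulNr !opprB subrX1.
have z0 : z`_0 = 0 by rewrite /z coefB coefZ coef1 /= mulVf // subrr.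
have hz : z = drop_poly 1 z * 'X^1.
  have := poly_take_drop 1 z.
  have -> : take_poly 1 z = 0.
    by apply/polyP => i; rewrite coef_take_poly coef0; case: i => //=.
  by rewrite add0r.
move=> i hi; rewrite hz exprMn -exprM mul1n coefB coefMXn hi.
by rewrite subr0.
Qed.

Definition Pade {F : fieldType} (n : nat) (s : {poly F}) :=
  exists c : {poly F}, [/\ c != 0, (size c <= n.+1)%N &
    forall l, (l <= n)%N -> (c * s)`_(n + l) = 0].

Lemma ident {F : fieldType} (e v : {poly F}) r m l :
  (size e <= m.+1)%N ->
  (e * v)`_(r.+2 + m + l) = (e * drop_poly r.+2 v)`_(m + l).
Proof.
move=> he.
rewrite -{1}(poly_take_drop r.+2 v) mulrDr coefD mulrA coefMXn.
rewrite nth_default ?add0r.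
  by rewrite ltnNge -addnA leq_addr /= addKn.
apply: (leq_trans (size_polyMleq _ _)).
have := size_take_poly r.+2 v; lia.
Qed.

Lemma sX {F : fieldType} (s c : {poly F}) r j :
  (forall i, (i < r)%N -> s`_i = 0) ->
  (c * s)`_(r + j) = (c * drop_poly r s)`_j.
Proof.
move=> hs.
have hs' : s = drop_poly r s * 'X^r.
  have := poly_take_drop r s.
  have -> : take_poly r s = 0.
    apply/polyP => i; rewrite coef_take_poly coef0.
    by case: ifP => // /hs.
  by rewrite add0r.
by rewrite {1}hs' mulrA coefMXn ltnNge leq_addr /= addKn.
Qed.

Lemma core_fwd {F : fieldType} (r n : nat) (s v : {poly F}) :
  (forall i, (i < r)%N -> s`_i = 0) -> (r <= n)%N ->
  eqm (n.*2.+1 - r) (drop_poly r s * v) 1 ->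
  Pade n s -> (r < n)%N /\ Pade (n - r).-1 (drop_poly r.+2 v).
Proof.
move=> hs hr hv [c [cnz csz cz]].
set w := drop_poly r s in hv *.
set M := (n.*2.+1 - r)%N in hv *.
have cw : forall l, (l <= n)%N -> (c * w)`_(n - r + l) = 0.
  by move=> l hl; rewrite -sX // addnA subnKC // cz.
set e := take_poly (n - r) (c * w).
have ecw : eqm M (c * w) e.
  move=> i hi; rewrite /e coef_take_poly; case: ifP => // hi2.
  have -> : i = (n - r + (i - (n - r)))%N by lia.
  by rewrite cw //; rewrite /M in hi; lia.
have cev : eqm M c (e * v).
  apply: (@eqm_trans _ _ _ (c * (w * v))).
    by rewrite -{1}(mulr1 c); apply: eqm_mul => //; apply: eqm_sym.
  by rewrite mulrA; apply: eqm_mul.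
have enz : e != 0.
  apply: contra cnz => /eqP e0; apply/eqP; apply: (eqm_small (j := M)).
  - by apply: leq_trans csz _; rewrite /M; lia.
  - by rewrite size_poly0.
  by move: cev; rewrite e0 mul0r.
have rn : (r < n)%N.
  rewrite ltnNge; apply/negP => hnr; move: enz; rewrite /e.
  have -> : (n - r = 0)%N by lia.
  by rewrite take_poly0l eqxx.
split => //; exists e; split => //.
  by apply: leq_trans (size_take_poly _ _) _; lia.
move=> l hl; rewrite -(ident _ r) ?(leq_trans (size_take_poly _ _)) //; last by lia.
rewrite -cev; last by rewrite /M; lia.
by rewrite nth_default //; apply: leq_trans csz _; lia.
Qed.

Lemma core_bwd {F : fieldType} (r n : nat) (s v : {poly F}) :
  (forall i, (i < r)%N -> s`_i = 0) -> (r < n)%N ->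
  eqm (n.*2.+1 - r) (drop_poly r s * v) 1 ->
  Pade (n - r).-1 (drop_poly r.+2 v) -> Pade n s.
Proof.
move=> hs hr hv [e [enz esz ez]].
set w := drop_poly r s in hv *.
set M := (n.*2.+1 - r)%N in hv *.
set m := (n - r).-1 in esz ez.
have ev : forall l, (l <= m)%N -> (e * v)`_(r.+2 + m + l) = 0.
  by move=> l hl; rewrite ident // ez.
set c := take_poly n.+1 (e * v).
have cev : eqm M c (e * v).
  move=> i hi; rewrite /c coef_take_poly; case: ifP => // hi2.
  have -> : i = (r.+2 + m + (i - n.+1))%N by rewrite /m; lia.
  by rewrite ev //; rewrite /m; rewrite /M in hi; lia.
have cnz : c != 0.
  apply: contra enz => /eqP c0; apply/eqP; apply: (eqm_small (j := M)).
  - by apply: leq_trans esz _; rewrite /M /m; lia.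
  - by rewrite size_poly0.
  apply: (@eqm_trans _ _ _ (e * (w * v))).
    by rewrite -{1}(mulr1 e); apply: eqm_mul => //; apply: eqm_sym.
  rewrite mulrA (mulrC e) -mulrA -(mul0r w) (mulrC w); apply: eqm_mul => //.
  by rewrite -c0; apply: eqm_sym.
exists c; split => //; first exact: size_take_poly.
move=> l hl.
have -> : (n + l = r + (n - r + l))%N by lia.
rewrite sX //.
have ce : eqm M (c * w) e.
  apply: (@eqm_trans _ _ _ (e * v * w)); first by apply: eqm_mul.
  by rewrite -mulrA (mulrC v) -{2}(mulr1 e); apply: eqm_mul.
rewrite ce; last by rewrite /M; lia.
by rewrite nth_default //; apply: leq_trans esz _; rewrite /m; lia.
Qed.

Lemma pade_zero {F : fieldType} (n : nat) (s : {poly F}) :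
  (forall i, (i <= n)%N -> s`_i = 0) -> Pade n s.
Proof.
move=> hs; exists 'X^n; split.
- by rewrite monic_neq0 ?monicXn.
- by rewrite size_polyXn.
by move=> l hl; rewrite coefXnM ltnNge leq_addr /= addKn hs.
Qed.

Definition Hs {F : fieldType} (n : nat) (s : {poly F}) : 'M[F]_n.+1 :=
  \matrix_(i < n.+1, j < n.+1) s`_(i + j).

Lemma coefM_rev {F : fieldType} (n l : nat) (c s : {poly F}) :
  (size c <= n.+1)%N ->
  (c * s)`_(n + l) = \sum_(i < n.+1) c`_(n - i) * s`_(i + l).
Proof.
move=> hc; rewrite coefM.
rewrite [RHS](reindex_inj rev_ord_inj) /=.
rewrite (big_ord_widen (n + l).+1 (fun j => c`_(n - (n.+1 - j.+1)) * s`_(n.+1 - j.+1 + l))) ?ltnS ?leq_addr //.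
rewrite [RHS]big_mkcond /=; apply: eq_bigr => i _.
case: ifP => hi; last by move/negbT: hi; rewrite -leqNgt => hi; rewrite nth_default ?mul0r //; apply: leq_trans hc hi.
congr (c`_ _ * s`_ _); lia.
Qed.

Lemma padeP {F : fieldType} (n : nat) (s : {poly F}) :
  reflect (Pade n s) (\det (Hs n s) == 0).
Proof.
apply: (iffP det0P).
  move=> [v vnz vH].
  pose c : {poly F} := \poly_(j < n.+1) v 0 (inord (n - j)).
  exists c; split.
  - apply: contra vnz => /eqP c0; apply/eqP/rowP => i.
    have := congr1 (fun p : {poly F} => p`_(n - i)) c0.
    rewrite coef0 coef_poly ifT; last by have := ltn_ord i; lia.
    rewrite mxE => <-; congr (v 0 _); apply/val_inj; rewrite /= inordK; have := ltn_ord i; lia.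
  - exact: size_poly.
  move=> l hl; rewrite coefM_rev ?size_poly //.
  transitivity ((v *m Hs n s) 0 (inord l)); last by rewrite vH mxE.
  rewrite !mxE; apply: eq_bigr => i _.
  rewrite coef_poly ifT; last by have := ltn_ord i; lia.
  rewrite mxE inordK ?ltnS //; congr (v 0 _ * _); apply/val_inj; rewrite /= inordK; have := ltn_ord i; lia.
move=> [c [cnz csz cz]].
exists (\row_(i < n.+1) c`_(n - i)).
  apply: contra cnz => /eqP v0; apply/eqP/polyP => j; rewrite coef0.
  case: (ltnP j n.+1) => hj; last by rewrite nth_default //; apply: leq_trans csz hj.
  have := congr1 (fun M : 'rV_n.+1 => M 0 (inord (n - j))) v0.
  rewrite !mxE inordK; last by lia.
  by have -> : (n - (n - j) = j)%N by lia.
apply/rowP => l; rewrite !mxE.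
transitivity ((c * s)`_(n + l)); last by rewrite cz //; have := ltn_ord l; lia.
by rewrite coefM_rev //; apply: eq_bigr => i _; rewrite !mxE.
Qed.

Lemma Hs_local {F : fieldType} (n : nat) (s s' : {poly F}) :
  (forall i, (i < n.*2.+1)%N -> s`_i = s'`_i) -> Hs n s = Hs n s'.
Proof.
move=> h; apply/matrixP => i j; rewrite !mxE h //.
have := ltn_ord i; have := ltn_ord j; lia.
Qed.

Definition S {F : finFieldType} (L : nat) (f : seq F -> nat) : nat :=
  (\sum_(t : L.-tuple F) f t)%N.

Lemma S_cons {F : finFieldType} L (f : seq F -> nat) :
  S L.+1 f = (\sum_(x : F) S L (fun t => f (x :: t)))%N.
Proof.
rewrite /S pair_big /= (reindex (fun p : F * L.-tuple F => cons_tuple p.1 p.2)) //.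
exists (fun t : L.+1.-tuple F => (thead t, behead_tuple t)) => [[x t] _ | t _].
  by congr pair; apply: val_inj.
by case/tupleP: t => x t; apply: val_inj.
Qed.

Lemma S0 {F : finFieldType} (f : seq F -> nat) : S 0 f = f [::].
Proof.
rewrite /S (big_pred1 [tuple]) // => t /=; apply/esym/eqP; apply: val_inj; by case: t => [[]].
Qed.

Lemma S_ext {F : finFieldType} L (f g : seq F -> nat) :
  (forall t, size t = L -> f t = g t) -> S L f = S L g.
Proof. by move=> h; apply: eq_bigr => t _; rewrite h // size_tuple. Qed.

Lemma S_cat {F : finFieldType} a b (f : seq F -> nat) :
  S (a + b) f = S a (fun t1 => S b (fun t2 => f (t1 ++ t2))).
Proof.
elim: a f => [|a IH] f; first by rewrite S0.
rewrite addSn S_cons S_cons; apply: eq_bigr => x _; exact: IH.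
Qed.

Lemma S_const {F : finFieldType} L c : S L (fun _ : seq F => c) = (#|F| ^ L * c)%N.
Proof.
elim: L => [|L IH]; first by rewrite S0 mul1n.
rewrite S_cons (eq_bigr (fun _ => #|F| ^ L * c)%N) ?sum_nat_const ?card_ord; last by move=> *; exact: IH.
by rewrite expnS mulnA.
Qed.

Lemma S_bij {F : finFieldType} L (phi : seq F -> seq F) (f : seq F -> nat) :
  (forall t, size t = L -> size (phi t) = L) ->
  (forall t t', size t = L -> size t' = L -> phi t = phi t' -> t = t') ->
  S L (fun t => f (phi t)) = S L f.
Proof.
move=> hs hi.
pose psi (t : L.-tuple F) : L.-tuple F := insubd t (phi t).
have psiE t : val (psi t) = phi t by rewrite /psi val_insubd hs ?size_tuple ?eqxx.
have psi_inj : injective psi.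
  by move=> t t' e; apply: val_inj; apply: hi; rewrite ?size_tuple // -!psiE e.
rewrite /S [RHS](reindex_inj psi_inj); apply: eq_bigr => t _; by rewrite psiE.
Qed.

Lemma eqm_inv {F : fieldType} j (w v w' v' : {poly F}) :
  eqm j (w * v) 1 -> eqm j (w' * v') 1 -> eqm j w w' -> eqm j v v'.
Proof.
move=> h1 h2 hw.
apply: (@eqm_trans _ _ _ (v * (w' * v'))).
  by rewrite -{1}(mulr1 v); apply: eqm_mul => //; apply: eqm_sym.
rewrite mulrA.
apply: (@eqm_trans _ _ _ ((v * w) * v')).
  by apply: eqm_mul => //; apply: eqm_mul => //; apply: eqm_sym.
by rewrite (mulrC v) -{2}(mul1r v'); apply: eqm_mul.
Qed.

Definition sing {F : fieldType} (n : nat) (s : {poly F}) := \det (Hs n s) == 0.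

Definition Cprop (F : finFieldType) n :=
  forall h : seq F, size h = n ->
  S n.+1 (fun t => sing n (Poly (h ++ t)) : nat) = (#|F| ^ n)%N.

Definition Gprop (F : finFieldType) m :=
  forall k (h : seq F), (k <= m)%N -> size h = k ->
  S (m.*2.+1 - k) (fun t => sing m (Poly (h ++ t)) : nat) = (#|F| ^ (m.*2 - k))%N.

Lemma G_of_C (F : finFieldType) m : Cprop F m -> Gprop F m.
Proof.
move=> hC k h hk hh.
have -> : (m.*2.+1 - k = (m - k) + m.+1)%N by lia.
rewrite S_cat.
rewrite (S_ext (g := fun _ => (#|F| ^ m)%N)); last first.
  move=> t1 ht1.
  rewrite (S_ext (g := fun t2 => sing m (Poly ((h ++ t1) ++ t2)) : nat)); last by move=> *; rewrite catA.
  apply: hC.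
  by rewrite size_cat hh ht1; lia.
by rewrite S_const -expnD; congr (_ ^ _)%N; lia.
Qed.

Lemma drop_polyPoly {F : fieldType} d (s : seq F) :
  drop_poly d (Poly s) = Poly (drop d s).
Proof. by apply/polyP => i; rewrite coef_drop_poly !coef_Poly nth_drop addnC. Qed.

Lemma S_pick {F : finFieldType} k (f : seq F -> nat) (s0 : seq F) c :
  size s0 = k -> (forall t, size t = k -> f t = if t == s0 then c else 0%N) ->
  S k f = c.
Proof.
move=> hs hf.
have hs' : size s0 == k by apply/eqP.
pose T0 : k.-tuple F := Tuple hs'.
rewrite /S (eq_bigr (fun t : k.-tuple F => if t == T0 then c else 0%N)).
  by rewrite -big_mkcond big_pred1_eq.
by move=> t _; rewrite hf ?size_tuple.
Qed.

Lemma C_zero (F : finFieldType) n : Cprop F n.+1 -> True.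
Proof. by []. Qed.

Lemma C_allzero (F : finFieldType) n (h : seq F) :
  size h = n -> (forall i, (i < n)%N -> h`_i = 0) ->
  S n.+1 (fun t => sing n (Poly (h ++ t)) : nat) = (#|F| ^ n)%N.
Proof.
move=> hh hz.
rewrite S_cons.
rewrite (eq_bigr (fun x : F => if x == 0 then (#|F| ^ n)%N else 0%N)).
  by rewrite -big_mkcond big_pred1_eq.
move=> x _.
have cs : forall t i, (Poly (h ++ x :: t))`_i = if (i < n)%N then 0 else (x :: t)`_(i - n).
  by move=> t i; rewrite coef_Poly nth_cat hh; case: ifP => // /hz.
case: eqP => [x0 | /eqP xnz].
  rewrite -[X in _ = X]muln1 -S_const; apply: S_ext => t _.
  have hP : Pade n (Poly (h ++ x :: t)).
    apply: pade_zero => i hi; rewrite cs; case: ifP => // hin.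
    have -> : (i - n = 0)%N by lia.
    by rewrite x0.
  by move/padeP: hP; rewrite /sing => ->.
rewrite -[X in _ = X](muln0 (#|F| ^ n)%N) -S_const; apply: S_ext => t _.
apply/eqP; rewrite eqb0; apply/padeP => hP.
have h1 : forall i, (i < n)%N -> (Poly (h ++ x :: t))`_i = 0 by move=> i hi; rewrite cs hi.
have h2 := @pinvP F (n.*2.+1 - n) (drop_poly n (Poly (h ++ x :: t))).
have w0 : (drop_poly n (Poly (h ++ x :: t)))`_0 != 0.
  by rewrite coef_drop_poly cs /= ltnn subnn.
have [hnn _] := core_fwd h1 (leqnn n) (h2 w0) hP.
by rewrite ltnn in hnn.
Qed.

Lemma C_step (F : finFieldType) n : (forall m, (m < n)%N -> Gprop F m) -> Cprop F n.
Proof.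
move=> IH h hh.
case: (boolP [exists i : 'I_n, h`_i != 0]) => [hex | hnex]; last first.
  apply: C_allzero => // i hi; apply/eqP; apply: contraNT hnex => hne.
  by apply/existsP; exists (Ordinal hi).
have exP : exists i, (i < n)%N && (h`_i != 0).
  by case/existsP: hex => i hi; exists (val i); rewrite ltn_ord.
case: (ex_minnP exP) => r /andP[rn hr] rmin.
have hz : forall i, (i < r)%N -> h`_i = 0.
  move=> i hi; apply/eqP; case: (boolP (h`_i == 0)) => // hne.
  have := rmin i; rewrite hne andbT => /(_ (ltn_trans hi rn)); lia.
pose M := (n.*2.+1 - r)%N.
pose j := (n - r)%N.
pose m := j.-1.
pose sof (t : seq F) := Poly (h ++ t).
pose vof t := pinv M (drop_poly r (sof t)).
pose v0 := pinv M (drop_poly r (Poly h)).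
pose vh := mkseq (fun i => v0`_i) j.
pose Psi t := mkseq (fun i => (vof t)`_(j + i)) n.+1.
pose g u := sing m (drop_poly r.+2 (Poly (vh ++ u))).
have cs : forall t i, (i < n)%N -> (sof t)`_i = h`_i.
  by move=> t i hi; rewrite /sof coef_Poly nth_cat hh hi.
have hs : forall t i, (i < r)%N -> (sof t)`_i = 0.
  by move=> t i hi; rewrite cs ?hz //; lia.
have hv : forall t, eqm M (drop_poly r (sof t) * vof t) 1.
  by move=> t; apply: pinvP; rewrite coef_drop_poly add0n cs.
have hv0 : eqm M (drop_poly r (Poly h) * v0) 1.
  by apply: pinvP; rewrite coef_drop_poly add0n coef_Poly.
have vlow : forall t, eqm j (vof t) v0.
  move=> t; apply: (eqm_inv (w := drop_poly r (sof t)) (w' := drop_poly r (Poly h))).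
  - by apply: eqm_le (hv t); rewrite /j /M; lia.
  - by apply: eqm_le hv0; rewrite /j /M; lia.
  - move=> i hi; rewrite !coef_drop_poly cs ?coef_Poly //; rewrite /j in hi; lia.
have vagree : forall t, eqm M (Poly (vh ++ Psi t)) (vof t).
  move=> t i hi; rewrite coef_Poly nth_cat size_mkseq.
  case: ltnP => hij; first by rewrite nth_mkseq // vlow.
  rewrite nth_mkseq; last by rewrite /M /j in hi hij *; lia.
  congr (_`_ _); rewrite /j in hij *; lia.
have key : forall t, size t = n.+1 -> sing n (sof t) = g (Psi t).
  move=> t ht; rewrite /g /sing.
  rewrite (@Hs_local _ m (drop_poly r.+2 (Poly (vh ++ Psi t))) (drop_poly r.+2 (vof t))); last first.
    move=> i hi; rewrite !coef_drop_poly vagree //; rewrite /M /m /j in hi *; lia.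
  apply/padeP/padeP => hP.
    by have [] := core_fwd (hs t) (ltnW rn) (hv t) hP.
  exact: core_bwd (hs t) rn (hv t) hP.
have inj : forall t t', size t = n.+1 -> size t' = n.+1 -> Psi t = Psi t' -> t = t'.
  move=> t t' ht ht' e.
  have vv : eqm M (vof t) (vof t').
    by apply: eqm_trans (eqm_sym (vagree t)) _; rewrite e; apply: vagree.
  have ww : eqm M (drop_poly r (sof t)) (drop_poly r (sof t')).
    apply: (eqm_inv (w := vof t) (w' := vof t')).
    - by rewrite mulrC; apply: hv.
    - by rewrite mulrC; apply: hv.
    - exact: vv.
  apply: (@eq_from_nth _ 0) => [|i hi]; first by rewrite ht ht'.
  rewrite ht in hi.
  have := ww (n + i - r)%N; rewrite !coef_drop_poly /sof !coef_Poly !nth_cat hh.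
  have -> : (n + i - r + r = n + i)%N by lia.
  rewrite [(n + i < n)%N]ltnNge leq_addr /= addKn; apply; rewrite /M; lia.
rewrite (S_ext (g := fun t => g (Psi t) : nat)); last first.
  by move=> t ht; exact: (congr1 nat_of_bool (key t ht)).
rewrite (@S_bij _ _ Psi (fun u => g u : nat)); last first.
- exact: inj.
- by move=> t _; rewrite size_mkseq.
have hvh : size vh = j by rewrite size_mkseq.
have hgE : forall u, g u = sing m (Poly (drop r.+2 (vh ++ u))).
  by move=> u; rewrite /g drop_polyPoly.
case: (leqP r.+2 j) => hrj.
  rewrite (S_ext (g := fun u => sing m (Poly (drop r.+2 vh ++ u)) : nat)); last first.
    move=> u _; rewrite hgE drop_cat hvh; case: ltnP => // h1.
    have e : r.+2 = j by lia.
    by rewrite -e subnn drop0 drop_oversize ?hvh ?e.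
  have -> : (n.+1 = m.*2.+1 - (j - r.+2))%N by rewrite /m /j; lia.
  rewrite (IH m _ (j - r.+2)%N) //.
  - by congr (_ ^ _)%N; rewrite /m /j; lia.
  - by rewrite /m /j; lia.
  - by rewrite /m /j in hrj *; lia.
  by rewrite size_drop hvh.
have -> : (n.+1 = (r.+2 - j) + m.*2.+1)%N by rewrite /m /j in hrj *; lia.
rewrite S_cat.
rewrite (S_ext (g := fun _ => (#|F| ^ m.*2)%N)).
  by rewrite S_const -expnD; congr (_ ^ _)%N; rewrite /m /j in hrj *; lia.
move=> u1 hu1.
rewrite (S_ext (g := fun u2 => sing m (Poly ([::] ++ u2)) : nat)).
  have := IH m _ 0 [::] (leq0n _) erefl; rewrite !subn0; apply.
  by rewrite /m /j; lia.
move=> u2 _; rewrite hgE drop_cat hvh ltnNge (ltnW hrj) /=.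
by rewrite drop_size_cat // hu1.
Qed.

Lemma G_all (F : finFieldType) m : Gprop F m.
Proof.
elim/ltn_ind: m => m IH; apply: G_of_C; apply: C_step => k hk; exact: IH.
Qed.

Theorem corollary4 (F : finFieldType) (k n : nat) (hkn : (k <= n)%N)
  (a : 'I_k -> F) :
  #|[set x : {ffun 'I_(n.*2.+1) -> F} |
      [forall i : 'I_k, x (inord i) == a i] && (\det (hankel x) == 0)]|
  = (#|F| ^ (n.*2 - k))%N.
Proof.
rewrite cardsE -sum1_card big_mkcond /=.
rewrite (reindex (fun t : (n.*2.+1).-tuple F => [ffun i => tnth t i])) /=; last first.
  exists (fun x : {ffun 'I_(n.*2.+1) -> F} => [tuple x i | i < n.*2.+1]) => [t _ | x _].
    by apply: eq_from_tnth => i; rewrite tnth_mktuple ffunE.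
  by apply/ffunP => i; rewrite ffunE tnth_mktuple.
transitivity (S n.*2.+1 (fun t : seq F =>
   ([forall i : 'I_k, t`_i == a i] && sing n (Poly t)) : nat)).
  rewrite /S; apply: eq_bigr => t _; rewrite unfold_in /=.
  have -> : hankel [ffun i => tnth t i] = Hs n (Poly t).
    apply/matrixP => i j; rewrite !mxE ffunE (tnth_nth 0) coef_Poly inordK //.
    by have := ltn_ord i; have := ltn_ord j; lia.
  have -> : [forall i : 'I_k, [ffun i0 => tnth t i0] (inord i) == a i] =
            [forall i : 'I_k, t`_i == a i].
    apply: eq_forallb => i; rewrite ffunE (tnth_nth 0) inordK //.
    by have := ltn_ord i; lia.
  by case: ([forall _, _] && _).
have -> : (n.*2.+1 = k + (n.*2.+1 - k))%N by lia.
rewrite S_cat.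
pose aseq := [seq a i | i <- enum 'I_k].
have ha : size aseq = k by rewrite size_map size_enum_ord.
have haE : forall i : 'I_k, aseq`_i = a i.
  by move=> i; rewrite (nth_map i) ?size_enum_ord // nth_ord_enum.
apply: (S_pick ha) => t1 ht1.
case: eqP => [-> | ne].
  rewrite (S_ext (g := fun t2 => sing n (Poly (aseq ++ t2)) : nat)).
    by apply: G_all.
  move=> t2 _.
  have -> : [forall i : 'I_k, (aseq ++ t2)`_i == a i].
    by apply/forallP => i; rewrite nth_cat ha ltn_ord haE.
  by [].
rewrite -[X in _ = X](muln0 (#|F| ^ (n.*2.+1 - k))%N) -S_const.
apply: S_ext => t2 _.
case: (boolP [forall i : 'I_k, (t1 ++ t2)`_i == a i]) => //= hf.
exfalso; apply: ne; apply: (@eq_from_nth _ 0) => [|i hi]; first by rewrite ht1 ha.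
rewrite ht1 in hi.
have := forallP hf (Ordinal hi); rewrite nth_cat ht1 hi => /eqP ->.
by rewrite -haE.
Qed.
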